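(* In the setting described in the context (with $g$ unimodal and symmetric about $0$): (a) $l(\cdot)$ is nondecreasing on $(-\infty,\infty)$; (b) $u(\cdot)$ is nondecreasing on $(d_0,\infty)$; (c) if moreover $g$ is logconcave, then $u(\cdot)$ is nondecreasing on $(-\infty,d_0)$.
   Context: Let $g$ be a probability density on $\mathbb{R}$, unimodal and symmetric about $0$ (i.e. $g(z)=g(-z)$ and $g$ nonincreasing on $[0,\infty)$), with cdf $G$ and quantile function $G^{-1}(t)=\inf\{x: G(x)\ge t\}$, $t\in(0,1)$. $g$ is logconcave if $\log g$ is concave on its support. Let $X$ have density $g(x-\theta)$ with unknown $\theta\ge0$. Fix $\alpha\in(0,1)$ and set $d_0=G^{-1}\big(\tfrac{1}{1+\alpha}\big)$. The $100(1-\alpha)\%$ HPD Bayesian credible interval for $\theta$ under the prior $\pi^*(\theta)=1_{[0,\infty)}(\theta)$ is $I_{\pi^*}(x)=[l(x),u(x)]$ where $l(x)=\big\{x-G^{-1}\big(\tfrac12+\tfrac{1-\alpha}{2}G(x)\big)\big\}1_{(d_0,\infty)}(x)$, and $u(x)=x-G^{-1}(\alpha G(x))$ for $x\le d_0$, $u(x)=x+G^{-1}\big(\tfrac12+\tfrac{1-\alpha}{2}G(x)\big)$ for $x>d_0$. *)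

(* Defs.v *)
From Stdlib Require Import Reals Lra.
Open Scope R_scope.

(* g is a probability density on R, with cdf G:
   g >= 0, G(b) - G(a) = Riemann integral of g over [a,b] (g is monotone on
   each half-line, hence Riemann integrable on bounded intervals),
   G(x) -> 0 as x -> -oo and G(x) -> 1 as x -> +oo. *)
Definition is_density_with_cdf (g G : R -> R) : Prop :=
  (forall x, 0 <= g x) /\
  (forall a b, a <= b ->
     exists pr : Riemann_integrable g a b, RiemannInt pr = G b - G a) /\
  (forall eps, 0 < eps -> exists M, forall x, x < M -> Rabs (G x) < eps) /\
  (forall eps, 0 < eps -> exists M, forall x, M < x -> Rabs (G x - 1) < eps).

Definition symmetric_unimodal (g : R -> R) : Prop :=
  (forall z, g z = g (- z)) /\
  (forall x y, 0 <= x -> x <= y -> g y <= g x).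

Definition logconcave (g : R -> R) : Prop :=
  forall x y t, 0 < g x -> 0 < g y -> 0 <= t <= 1 ->
    0 < g (t * x + (1 - t) * y) /\
    t * ln (g x) + (1 - t) * ln (g y) <= ln (g (t * x + (1 - t) * y)).

Definition is_inf (E : R -> Prop) (m : R) : Prop :=
  (forall x, E x -> m <= x) /\ (forall b, (forall x, E x -> b <= x) -> b <= m).

Definition is_quantile (G Ginv : R -> R) : Prop :=
  forall t, 0 < t < 1 -> is_inf (fun x => t <= G x) (Ginv t).

Definition d0 (Ginv : R -> R) (alpha : R) : R := Ginv (1 / (1 + alpha)).

Definition l_fn (G Ginv : R -> R) (alpha x : R) : R :=
  if Rlt_dec (d0 Ginv alpha) x
  then x - Ginv (1 / 2 + (1 - alpha) / 2 * G x)
  else 0.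

Definition u_fn (G Ginv : R -> R) (alpha x : R) : R :=
  if Rle_dec x (d0 Ginv alpha)
  then x - Ginv (alpha * G x)
  else x + Ginv (1 / 2 + (1 - alpha) / 2 * G x).

(* Main.v *)
Require Import Defs.
From Stdlib Require Import Reals.
From Stdlib Require Import Lra Lia List RList RiemannInt_SF RiemannInt Classical Rpower.
Open Scope R_scope.

Lemma pos_Rl_map (h : R -> R) (l : list R) (i : nat) (H : (i < length l)%nat) :
  pos_Rl (map h l) i = h (pos_Rl l i).
Proof.
  revert i H; induction l as [|x l IH]; intros i H; simpl in *. lia.
  destruct i; [reflexivity|]. apply IH; lia.
Qed.

Lemma Rmin_shift a b c : Rmin (a + c) (b + c) = Rmin a b + c.
Proof. unfold Rmin; destruct (Rle_dec (a+c) (b+c)), (Rle_dec a b); lra. Qed.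
Lemma Rmax_shift a b c : Rmax (a + c) (b + c) = Rmax a b + c.
Proof. unfold Rmax; destruct (Rle_dec (a+c) (b+c)), (Rle_dec a b); lra. Qed.

Lemma adapted_shift (f : R -> R) a b c l lf :
  adapted_couple f (a + c) (b + c) l lf ->
  adapted_couple (fun t => f (t + c)) a b (map (fun t => t - c) l) lf.
Proof.
  intros [Ho [H0 [H1 [H2 H3]]]].
  assert (Hl : length l = S (length lf)) by exact H2.
  repeat split.
  - unfold ordered_Rlist in *. intros i Hi. rewrite length_map in Hi.
    rewrite !pos_Rl_map by lia. specialize (Ho i Hi). lra.
  - rewrite pos_Rl_map by lia. rewrite H0, Rmin_shift. ring.
  - rewrite length_map, pos_Rl_map by lia. rewrite H1, Rmax_shift. ring.
  - rewrite length_map; exact H2.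
  - intros i Hi. rewrite length_map in Hi. unfold constant_D_eq, open_interval in *.
    intros x Hx. rewrite !pos_Rl_map in Hx by lia.
    apply (H3 i Hi). lra.
Qed.

Definition shift_SF (a b c : R) (phi : StepFun (a + c) (b + c)) : StepFun a b :=
  mkStepFun (existT _ (map (fun t => t - c) (subdivision phi))
    (existT _ (subdivision_val phi)
      (adapted_shift (fe phi) a b c _ _ (StepFun_P1 phi)))
    : IsStepFun (fun t => phi (t + c)) a b).

Lemma Int_SF_shift c lf l : Int_SF lf (map (fun t => t - c) l) = Int_SF lf l.
Proof.
  revert l; induction lf as [|v lf IH]; intros l; simpl. reflexivity.
  destruct l as [|x [|y k]]; simpl; try reflexivity.
  specialize (IH (y :: k)). simpl in IH. rewrite IH. ring.
Qed.

Lemma RiemannInt_SF_shift a b c phi :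
  RiemannInt_SF (shift_SF a b c phi) = RiemannInt_SF phi.
Proof.
  unfold RiemannInt_SF. simpl.
  destruct (Rle_dec a b), (Rle_dec (a+c) (b+c)); try lra;
  unfold subdivision_val, subdivision; simpl; rewrite Int_SF_shift; reflexivity.
Qed.

Definition shift_pr (f : R -> R) (a b c : R) (pr : Riemann_integrable f (a + c) (b + c)) :
  Riemann_integrable (fun t => f (t + c)) a b.
Proof.
  intro eps.
  exists (shift_SF a b c (projT1 (pr eps))).
  exists (shift_SF a b c (proj1_sig (projT2 (pr eps)))).
  destruct (proj2_sig (projT2 (pr eps))) as [H1 H2].
  split.
  - intros t Ht. simpl. apply H1. rewrite Rmin_shift, Rmax_shift. lra.
  - rewrite RiemannInt_SF_shift. exact H2.
Defined.

Lemma Un_cv_ext u v l : (forall n, u n = v n) -> Un_cv u l -> Un_cv v l.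
Proof. intros E H eps He. destruct (H eps He) as [N HN]. exists N. intros n Hn. rewrite <- E. auto. Qed.

Lemma RiemannInt_shift f a b c (pr : Riemann_integrable f (a + c) (b + c)) :
  RiemannInt (shift_pr f a b c pr) = RiemannInt pr.
Proof.
  unfold RiemannInt.
  destruct (RiemannInt_exists (shift_pr f a b c pr) RinvN RinvN_cv) as [x Hx].
  destruct (RiemannInt_exists pr RinvN RinvN_cv) as [y Hy].
  eapply UL_sequence. exact Hx.
  eapply Un_cv_ext; [|exact Hy].
  intro n. unfold phi_sequence. simpl. rewrite RiemannInt_SF_shift. reflexivity.
Qed.

Lemma g_nonneg g G (Hd : is_density_with_cdf g G) z : 0 <= g z.
Proof. destruct Hd as [H _]. apply H. Qed.

Lemma g_mono g (Hs : symmetric_unimodal g) p z : 0 <= p -> p <= z -> g z <= g p.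
Proof. destruct Hs as [_ H]. apply H. Qed.

Lemma g_bound g (Hs : symmetric_unimodal g) z : g z <= g 0.
Proof.
  destruct (Rle_dec 0 z). apply g_mono; auto; lra.
  destruct Hs as [H1 H2]. rewrite H1. apply H2; lra.
Qed.

Lemma incr_bounds g G (Hd : is_density_with_cdf g G) a b lo hi : a <= b ->
  (forall x, a < x < b -> lo <= g x <= hi) ->
  lo * (b - a) <= G b - G a <= hi * (b - a).
Proof.
  intros Hab H. destruct Hd as [_ [Hi _]]. destruct (Hi a b Hab) as [pr E].
  rewrite <- E. apply RiemannInt_const_bound; auto.
Qed.


Lemma G_incr g G (Hd : is_density_with_cdf g G) (Hs : symmetric_unimodal g) a b :
  a <= b -> 0 <= G b - G a <= g 0 * (b - a).
Proof.
  intros Hab. assert (H := incr_bounds g G Hd a b 0 (g 0) Hab).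
  assert (0 * (b - a) <= G b - G a <= g 0 * (b - a)).
  apply H. intros x _. split. eapply g_nonneg; eauto. apply g_bound; auto.
  lra.
Qed.

Lemma G_mono g G (Hd : is_density_with_cdf g G) (Hs : symmetric_unimodal g) a b :
  a <= b -> G a <= G b.
Proof. intros H. assert (K := G_incr g G Hd Hs a b H). lra. Qed.

Lemma G_01 g G (Hd : is_density_with_cdf g G) (Hs : symmetric_unimodal g) x :
  0 <= G x <= 1.
Proof.
  split.
  - destruct (Rle_dec 0 (G x)) as [|Hn]; auto. exfalso.
    pose proof Hd as Hdd; destruct Hdd as [_ [_ [Hl _]]]. destruct (Hl (- G x)) as [M HM]; [lra|].
    set (z := Rmin M x - 1).
    assert (Hz : z < M) by (unfold z; assert (Rmin M x <= M) by apply Rmin_l; lra).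
    assert (Hzx : z <= x) by (unfold z; assert (Rmin M x <= x) by apply Rmin_r; lra).
    specialize (HM z Hz). assert (G z <= G x) by (eapply G_mono; [exact Hd|exact Hs|exact Hzx]).
    unfold Rabs in HM; destruct (Rcase_abs (G z)); lra.
  - destruct (Rle_dec (G x) 1) as [|Hn]; auto. exfalso.
    pose proof Hd as Hdd; destruct Hdd as [Hg [Hi [Hl Hu]]]. destruct (Hu (G x - 1)) as [M HM]; [lra|].
    set (z := Rmax M x + 1).
    assert (Hz : M < z) by (unfold z; assert (M <= Rmax M x) by apply Rmax_l; lra).
    assert (Hzx : x <= z) by (unfold z; assert (x <= Rmax M x) by apply Rmax_r; lra).
    specialize (HM z Hz). assert (G x <= G z) by (eapply G_mono; [split; eauto|exact Hs|exact Hzx]).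
    unfold Rabs in HM; destruct (Rcase_abs (G z - 1)); lra.
Qed.

Lemma Ginv_lb G Ginv (Hq : is_quantile G Ginv) t z : 0 < t < 1 -> t <= G z -> Ginv t <= z.
Proof. intros Ht Hz. apply (proj1 (Hq t Ht)). auto. Qed.

Lemma Ginv_mono G Ginv (Hq : is_quantile G Ginv) t s : 0 < t -> t <= s -> s < 1 ->
  Ginv t <= Ginv s.
Proof.
  intros. apply (proj2 (Hq s ltac:(lra))). intros x Hx.
  apply (Ginv_lb G Ginv Hq); lra.
Qed.

Lemma G_Ginv g G Ginv (Hd : is_density_with_cdf g G) (Hs : symmetric_unimodal g)
  (Hq : is_quantile G Ginv) t : 0 < t < 1 -> t <= G (Ginv t).
Proof.
  intros Ht. set (m := Ginv t).
  destruct (Rle_dec t (G m)) as [|Hn]; auto. exfalso.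
  assert (Hg0 : 0 <= g 0) by (eapply g_nonneg; eauto).
  set (eps := (t - G m) / (2 * (g 0 + 1))).
  assert (He : 0 < eps) by (unfold eps; apply Rdiv_lt_0_compat; lra).
  assert (Hex : exists x, t <= G x /\ x < m + eps).
  { apply NNPP. intro Hne.
    assert (m + eps <= m).
    { apply (proj2 (Hq t Ht)). intros x Hx.
      destruct (Rle_dec (m + eps) x); auto. exfalso. apply Hne. exists x. split; auto; lra. }
    lra. }
  destruct Hex as [x [Hx1 Hx2]].
  assert (G x <= G (m + eps)) by (eapply G_mono; eauto; lra).
  assert (K := G_incr g G Hd Hs m (m + eps) ltac:(lra)).
  assert (g 0 * (m + eps - m) = (t - G m) * (g 0 / (2 * (g 0 + 1)))) by (unfold eps; field; lra).
  assert (g 0 / (2 * (g 0 + 1)) < 1).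
  { apply (Rmult_lt_reg_r (2 * (g 0 + 1))); [lra|]. unfold Rdiv. rewrite Rmult_assoc, Rinv_l; lra. }
  assert ((t - G m) * (g 0 / (2 * (g 0 + 1))) < t - G m).
  { rewrite <- (Rmult_1_r (t - G m)) at 2. apply Rmult_lt_compat_l; lra. }
  lra.
Qed.

Lemma sym_step g G (Hd : is_density_with_cdf g G) (Hs : symmetric_unimodal g) h (Hh : 0 < h) k :
  let E := (G 0 - G (- (INR k * h))) - (G (INR k * h) - G 0) in
  - (h * (g 0 - g (INR k * h))) <= E <= h * (g 0 - g (INR k * h)).
Proof.
  cbv zeta. induction k as [|k IH].
  - rewrite Rmult_0_l, Ropp_0. lra.
  - rewrite S_INR. set (p := INR k * h) in *.
    assert (Hp : 0 <= p) by (unfold p; apply Rmult_le_pos; [apply pos_INR|lra]).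
    replace ((INR k + 1) * h) with (p + h) by (unfold p; ring).
    assert (A := incr_bounds g G Hd p (p + h) (g (p + h)) (g p) ltac:(lra)).
    assert (B := incr_bounds g G Hd (- (p + h)) (- p) (g (p + h)) (g p) ltac:(lra)).
    assert (A' : g (p + h) * (p + h - p) <= G (p + h) - G p <= g p * (p + h - p)).
    { apply A. intros x Hx. split; apply g_mono; auto; lra. }
    assert (B' : g (p + h) * (- p - - (p + h)) <= G (- p) - G (- (p + h)) <= g p * (- p - - (p + h))).
    { apply B. intros x Hx. destruct Hs as [Hs1 Hs2]. rewrite (Hs1 x).
      split; apply Hs2; lra. }
    replace (p + h - p) with h in A' by ring.
    replace (- p - - (p + h)) with h in B' by ring.
    nra.
Qed.

Lemma G0_half g G (Hd : is_density_with_cdf g G) (Hs : symmetric_unimodal g) : G 0 = 1 / 2.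
Proof.
  assert (Hg0 : 0 <= g 0) by (eapply g_nonneg; eauto).
  assert (HM : forall M, 0 < M -> 2 * G 0 - G (- M) - G M = 0).
  { intros M HMp. set (D := 2 * G 0 - G (- M) - G M).
    assert (forall eps, 0 < eps -> Rabs D <= eps).
    { intros eps He. destruct (INR_unbounded (Rmax (M * g 0 / eps) 1)) as [n Hn].
      assert (Hn1 : 1 < INR n) by (assert (1 <= Rmax (M * g 0 / eps) 1) by apply Rmax_r; lra).
      assert (Hn2 : M * g 0 / eps < INR n) by (assert (M * g 0 / eps <= Rmax (M * g 0 / eps) 1) by apply Rmax_l; lra).
      set (h := M / INR n).
      assert (Hh : 0 < h) by (unfold h; apply Rdiv_lt_0_compat; lra).
      assert (K := sym_step g G Hd Hs h Hh n). simpl in K.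
      replace (INR n * h) with M in K by (unfold h; field; lra).
      assert (0 <= g M) by (eapply g_nonneg; eauto).
      assert (h * g 0 <= eps).
      { unfold h. apply (Rmult_le_reg_r (INR n)); [lra|].
        replace (M / INR n * g 0 * INR n) with (M * g 0) by (field; lra).
        apply (Rmult_lt_compat_l eps) in Hn2; [|lra].
        replace (eps * (M * g 0 / eps)) with (M * g 0) in Hn2 by (field; lra). lra. }
      unfold D. apply Rabs_le. nra. }
    destruct (Req_dec D 0) as [|Hne]; auto. exfalso.
    assert (Ha : 0 < Rabs D) by (apply Rabs_pos_lt; auto).
    specialize (H (Rabs D / 2) ltac:(lra)). lra. }
  assert (forall eps, 0 < eps -> Rabs (2 * G 0 - 1) <= 2 * eps).
  { intros eps He. destruct Hd as [_ [_ [Hl Hu]]].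
    destruct (Hl eps He) as [M1 H1]. destruct (Hu eps He) as [M2 H2].
    set (M := Rabs M1 + Rabs M2 + 1).
    assert (Rabs M1 >= 0 /\ Rabs M2 >= 0) by (split; apply Rle_ge, Rabs_pos).
    assert (M1 <= Rabs M1 /\ M2 <= Rabs M2) by (split; apply RRle_abs).
    assert (- Rabs M1 <= M1) by (assert (- M1 <= Rabs M1) by (rewrite <- Rabs_Ropp; apply RRle_abs); lra).
    specialize (H1 (- M) ltac:(unfold M; lra)). specialize (H2 M ltac:(unfold M; lra)).
    specialize (HM M ltac:(unfold M; lra)).
    apply Rabs_def2 in H1. apply Rabs_def2 in H2. apply Rabs_le. lra. }
  destruct (Req_dec (2 * G 0 - 1) 0) as [|Hne]; [lra|]. exfalso.
  assert (Ha : 0 < Rabs (2 * G 0 - 1)) by (apply Rabs_pos_lt; auto).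
  specialize (H (Rabs (2 * G 0 - 1) / 4) ltac:(lra)). lra.
Qed.

Lemma Ginv_nonneg g G Ginv (Hd : is_density_with_cdf g G) (Hs : symmetric_unimodal g)
  (Hq : is_quantile G Ginv) t : 1 / 2 < t < 1 -> 0 <= Ginv t.
Proof.
  intros Ht. apply (proj2 (Hq t ltac:(lra))). intros x Hx.
  destruct (Rle_dec 0 x); auto. exfalso.
  assert (G x <= G 0) by (eapply G_mono; eauto; lra).
  rewrite (G0_half g G Hd Hs) in H. lra.
Qed.

Lemma incr_compare g G (Hd : is_density_with_cdf g G) (Hs : symmetric_unimodal g) a x d :
  0 <= a -> a <= x -> 0 <= d -> G (x + d) - G x <= G (a + d) - G a.
Proof.
  intros Ha Hax Hd0.
  destruct (Rle_dec (a + d) x).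
  - assert (A : g (a + d) * (a + d - a) <= G (a + d) - G a <= g a * (a + d - a)).
    { apply (incr_bounds g G Hd); [lra|]. intros z Hz. split; apply g_mono; auto; lra. }
    assert (B : g (x + d) * (x + d - x) <= G (x + d) - G x <= g x * (x + d - x)).
    { apply (incr_bounds g G Hd); [lra|]. intros z Hz. split; apply g_mono; auto; lra. }
    assert (g x <= g (a + d)) by (apply g_mono; auto; lra). nra.
  - assert (A : g x * (x - a) <= G x - G a <= g a * (x - a)).
    { apply (incr_bounds g G Hd); [lra|]. intros z Hz. split; apply g_mono; auto; lra. }
    assert (B : g (x + d) * (x + d - (a + d)) <= G (x + d) - G (a + d) <= g (a + d) * (x + d - (a + d))).
    { apply (incr_bounds g G Hd); [lra|]. intros z Hz. split; apply g_mono; auto; lra. }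
    assert (g (a + d) <= g x) by (apply g_mono; auto; lra). nra.
Qed.

Lemma LC g (Hd0 : forall z, 0 <= g z) (Hlc : logconcave g) r s d :
  r <= s -> 0 <= d -> g r * g (s + d) <= g (r + d) * g s.
Proof.
  intros Hrs Hd.
  destruct (Rle_dec (g r) 0). { assert (g r = 0) by (specialize (Hd0 r); lra).
    rewrite H, Rmult_0_l. apply Rmult_le_pos; auto. }
  destruct (Rle_dec (g (s + d)) 0). { assert (g (s + d) = 0) by (specialize (Hd0 (s + d)); lra).
    rewrite H, Rmult_0_r. apply Rmult_le_pos; auto. }
  destruct (Req_dec (s + d) r) as [E|E].
  { assert (d = 0) by lra. assert (s = r) by lra. subst d. rewrite H0, Rplus_0_r. apply Req_le; ring. }
  set (t := (s - r) / (s + d - r)).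
  assert (Ht : 0 <= t <= 1).
  { unfold t. split. apply Rmult_le_pos; [lra|]. apply Rlt_le, Rinv_0_lt_compat; lra.
    apply (Rmult_le_reg_r (s + d - r)); [lra|]. unfold Rdiv. rewrite Rmult_assoc, Rinv_l; lra. }
  destruct (Hlc r (s + d) t ltac:(lra) ltac:(lra) Ht) as [P1 L1].
  destruct (Hlc r (s + d) (1 - t) ltac:(lra) ltac:(lra) ltac:(lra)) as [P2 L2].
  replace (t * r + (1 - t) * (s + d)) with (r + d) in P1, L1 by (unfold t; field; lra).
  replace ((1 - t) * r + (1 - (1 - t)) * (s + d)) with s in P2, L2 by (unfold t; field; lra).
  destruct (Rle_dec (g r * g (s + d)) (g (r + d) * g s)) as [|Hn]; auto. exfalso.
  assert (Hlt : ln (g (r + d) * g s) < ln (g r * g (s + d))).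
  { apply ln_increasing. apply Rmult_lt_0_compat; auto. lra. }
  rewrite !ln_mult in Hlt by lra. lra.
Qed.

Lemma int_cmp f1 f2 a b k1 k2 (pr1 : Riemann_integrable f1 a b) (pr2 : Riemann_integrable f2 a b) :
  a <= b -> (forall x, a < x < b -> k1 * f1 x <= k2 * f2 x) ->
  k1 * RiemannInt pr1 <= k2 * RiemannInt pr2.
Proof.
  intros Hab H.
  set (c := RiemannInt_P14 a b 0).
  set (p1 := RiemannInt_P10 k1 c pr1). set (p2 := RiemannInt_P10 k2 c pr2).
  assert (E1 := RiemannInt_P13 c pr1 p1). assert (E2 := RiemannInt_P13 c pr2 p2).
  rewrite (RiemannInt_P15 c) in E1, E2.
  assert (RiemannInt p1 <= RiemannInt p2).
  { apply RiemannInt_P19; auto. intros x Hx. unfold fct_cte. specialize (H x Hx). lra. }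
  lra.
Qed.

Lemma int_shift g G (Hd : is_density_with_cdf g G) a b c : a <= b ->
  exists pr : Riemann_integrable (fun t => g (t + c)) a b, RiemannInt pr = G (b + c) - G (a + c).
Proof.
  intros Hab. destruct Hd as [_ [Hi _]]. destruct (Hi (a + c) (b + c) ltac:(lra)) as [pr E].
  exists (shift_pr g a b c pr). rewrite RiemannInt_shift. exact E.
Qed.

Lemma int_0 g G (Hd : is_density_with_cdf g G) a b : a <= b ->
  exists pr : Riemann_integrable g a b, RiemannInt pr = G b - G a.
Proof. intros Hab. destruct Hd as [_ [Hi _]]. apply Hi; auto. Qed.

Lemma Pf g G (Hd : is_density_with_cdf g G) (Hlc : logconcave g) q s d :
  q <= s -> 0 <= d -> g (s + d) * G q <= g s * G (q + d).
Proof.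
  intros Hqs Hd0.
  assert (Hg : forall z, 0 <= g z) by (intro; eapply g_nonneg; eauto).
  assert (HM : forall M, M <= q -> g (s + d) * (G q - G M) <= g s * (G (q + d) - G (M + d))).
  { intros M HM. destruct (int_0 g G Hd M q HM) as [p1 E1].
    destruct (int_shift g G Hd M q d HM) as [p2 E2].
    rewrite <- E1, <- E2. apply int_cmp; auto. intros x Hx.
    rewrite (Rmult_comm (g s)), (Rmult_comm (g (s + d))). apply LC; auto; lra. }
  apply Rle_plus_epsilon. intros eps He.
  set (K := g s + g (s + d) + 1).
  assert (HK : 0 < K) by (unfold K; assert (Hg1 := Hg s); assert (Hg2 := Hg (s + d)); lra).
  pose proof Hd as Hdd. destruct Hdd as [_ [_ [Hl _]]].
  destruct (Hl (eps / K) ltac:(apply Rdiv_lt_0_compat; lra)) as [M0 H0].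
  set (M := Rmin q (M0 - d) - 1).
  assert (Rmin q (M0 - d) <= q) by apply Rmin_l.
  assert (Rmin q (M0 - d) <= M0 - d) by apply Rmin_r.
  specialize (HM M ltac:(unfold M; lra)).
  assert (A1 := H0 M ltac:(unfold M; lra)). assert (A2 := H0 (M + d) ltac:(unfold M; lra)).
  apply Rabs_def2 in A1. apply Rabs_def2 in A2.
  assert (g (s + d) * G M <= g (s + d) * (eps / K)) by (apply Rmult_le_compat_l; auto; lra).
  assert (- (g s * G (M + d)) <= g s * (eps / K)) by
    (rewrite Ropp_mult_distr_r; apply Rmult_le_compat_l; auto; lra).
  assert ((g (s + d) + g s) * (eps / K) <= eps).
  { apply (Rmult_le_reg_r K); auto. replace ((g (s + d) + g s) * (eps / K) * K) with ((g (s + d) + g s) * eps) by (field; lra).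
    unfold K. assert (Hg1 := Hg s); assert (Hg2 := Hg (s + d)). nra. }
  nra.
Qed.

Lemma Key g G (Hd : is_density_with_cdf g G) (Hlc : logconcave g) q x d :
  q <= x -> 0 <= d -> G (x + d) * G q <= G (q + d) * G x.
Proof.
  intros Hqx Hd0.
  destruct (int_0 g G Hd q x Hqx) as [p1 E1].
  destruct (int_shift g G Hd q x d Hqx) as [p2 E2].
  assert (G q * RiemannInt p2 <= G (q + d) * RiemannInt p1).
  { apply int_cmp; auto. intros s Hs. rewrite Rmult_comm, (Rmult_comm (G (q + d))). apply Pf; auto; lra. }
  rewrite E1, E2 in H. nra.
Qed.

Theorem lemma4 (g G Ginv : R -> R) (alpha : R)
  (Hdens : is_density_with_cdf g G)
  (Hsym : symmetric_unimodal g)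
  (Hq : is_quantile G Ginv)
  (Halpha : 0 < alpha < 1) :
  (forall x y, x <= y -> l_fn G Ginv alpha x <= l_fn G Ginv alpha y) /\
  (forall x y, d0 Ginv alpha < x -> x <= y ->
     u_fn G Ginv alpha x <= u_fn G Ginv alpha y) /\
  (logconcave g ->
   forall x y, 0 < G x -> x <= y -> y < d0 Ginv alpha ->
     u_fn G Ginv alpha x <= u_fn G Ginv alpha y).
Proof.
  assert (H01 := G_01 g G Hdens Hsym).
  assert (HGm := G_mono g G Hdens Hsym).
  set (c0 := 1 / (1 + alpha)).
  assert (Hc0 : 1 / 2 < c0 < 1).
  { assert (E : c0 * (1 + alpha) = 1) by (unfold c0; field; lra). split; nra. }
  assert (Hd0 : c0 <= G (d0 Ginv alpha)).
  { apply (G_Ginv g G Ginv Hdens Hsym Hq). lra. }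
  set (h := fun z => 1 / 2 + (1 - alpha) / 2 * G z).
  assert (Hh : forall z, 1 / 2 <= h z < 1).
  { intro z. unfold h. specialize (H01 z). split; nra. }
  assert (Hhle : forall z, d0 Ginv alpha < z -> h z <= G z).
  { intros z Hz. assert (G (d0 Ginv alpha) <= G z) by (apply HGm; lra).
    unfold h. assert (c0 * (1 + alpha) = 1) by (unfold c0; field; lra). nra. }
  assert (Hhgt : forall z, d0 Ginv alpha < z -> 1 / 2 < h z).
  { intros z Hz. assert (G (d0 Ginv alpha) <= G z) by (apply HGm; lra).
    unfold h. nra. }
  split; [|split].
  - intros x y Hxy. unfold l_fn.
    destruct (Rlt_dec (d0 Ginv alpha) x) as [Hx|Hx];
    destruct (Rlt_dec (d0 Ginv alpha) y) as [Hy|Hy]; try lra.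
    + fold (h x). fold (h y).
      set (a := Ginv (h x)).
      assert (Ha0 : 0 <= a) by (apply (Ginv_nonneg g G Ginv Hdens Hsym Hq); specialize (Hhgt x Hx); specialize (Hh x); lra).
      assert (Hax : a <= x) by (apply (Ginv_lb G Ginv Hq); [specialize (Hhgt x Hx); specialize (Hh x); lra|apply Hhle; auto]).
      assert (HGa : h x <= G a) by (apply (G_Ginv g G Ginv Hdens Hsym Hq); specialize (Hhgt x Hx); specialize (Hh x); lra).
      assert (K := incr_compare g G Hdens Hsym a x (y - x) Ha0 Hax ltac:(lra)).
      replace (x + (y - x)) with y in K by ring.
      assert (Ginv (h y) <= a + (y - x)).
      { apply (Ginv_lb G Ginv Hq). specialize (Hhgt y Hy); specialize (Hh y); lra.
        assert (G x <= G y) by (apply HGm; lra). unfold h in *. nra. }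
      lra.
    + fold (h y). assert (Ginv (h y) <= y).
      { apply (Ginv_lb G Ginv Hq). specialize (Hhgt y Hy); specialize (Hh y); lra. apply Hhle; auto. }
      lra.
  - intros x y Hx Hxy. unfold u_fn.
    destruct (Rle_dec x (d0 Ginv alpha)); [lra|].
    destruct (Rle_dec y (d0 Ginv alpha)); [lra|].
    fold (h x). fold (h y).
    assert (Ginv (h x) <= Ginv (h y)).
    { apply (Ginv_mono G Ginv Hq). specialize (Hh x); lra.
      unfold h. assert (G x <= G y) by (apply HGm; lra). nra. specialize (Hh y); lra. }
    lra.
  - intros Hlc x y Hx Hxy Hy. unfold u_fn.
    destruct (Rle_dec x (d0 Ginv alpha)); [|lra].
    destruct (Rle_dec y (d0 Ginv alpha)); [|lra].
    assert (HGy : G x <= G y) by (apply HGm; lra).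
    assert (Hx1 := H01 x). assert (Hy1 := H01 y).
    assert (T1 : 0 < alpha * G x < 1) by nra.
    assert (T2 : 0 < alpha * G y < 1) by nra.
    set (q := Ginv (alpha * G x)).
    assert (Hqx : q <= x) by (apply (Ginv_lb G Ginv Hq); auto; nra).
    assert (HGq : alpha * G x <= G q) by (apply (G_Ginv g G Ginv Hdens Hsym Hq); auto).
    assert (K := Key g G Hdens Hlc q x (y - x) Hqx ltac:(lra)).
    replace (x + (y - x)) with y in K by ring.
    assert (alpha * G y <= G (q + (y - x))).
    { assert (G y * (alpha * G x) <= G y * G q) by (apply Rmult_le_compat_l; lra).
      apply (Rmult_le_reg_r (G x)); auto. nra. }
    assert (Ginv (alpha * G y) <= q + (y - x)) by (apply (Ginv_lb G Ginv Hq); auto).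
    lra.
Qed.
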